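(* The relation algebra $30_{65}$ has a representation on a finite set.
   Context: $30_{65}$ is the finite symmetric integral relation algebra with atoms $1',a,b,c$ whose mandatory diversity cycle types are exactly $aaa, ccc, abb, baa, caa, abc$ (so $bbb, acc, bcc, cbb$ are forbidden); a cycle type is the multiset of colors of the sides of a triangle, e.g. $baa$ = one side $b$, two sides $a$. A representation on a set $X$ is a coloring of all 2-element subsets of $X$ by $a,b,c$, each color used, such that: for every mandatory type $\{h,i,j\}$, every edge $\{x,y\}$ colored $h$ (for each choice of $h$ among the three colors of the type) and each ordering $(i,j)$ of the remaining two colors, some $z$ has $\{x,z\}$ colored $i$ and $\{z,y\}$ colored $j$; and no triangle of a forbidden type occurs. *)

(* Defs.v *)
From HB Require Import structures.
From mathcomp Require Import all_boot.
Set Implicit Arguments. Unset Strict Implicit. Unset Printing Implicit Defensive.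

(* The three diversity atoms a, b, c of 30_65. *)
Inductive col := Ca | Cb | Cc.

Definition col_code (c : col) : 'I_3 :=
  match c with Ca => inord 0 | Cb => inord 1 | Cc => inord 2 end.
Definition col_decode (i : 'I_3) : col :=
  match val i with 0 => Ca | 1 => Cb | _ => Cc end.
Lemma col_codeK : cancel col_code col_decode.
Proof. by case; rewrite /col_decode /= inordK. Qed.
HB.instance Definition _ := Equality.copy col (can_type col_codeK).
HB.instance Definition _ := Finite.copy col (can_type col_codeK).

(* Cycle types are multisets of three colours, written as sequences;
   a triple (h,i,j) has a given type iff [:: h; i; j] is a permutation of it. *)
Definition mandatory_types : seq (seq col) :=
  [:: [:: Ca; Ca; Ca]; [:: Cc; Cc; Cc]; [:: Ca; Cb; Cb];
      [:: Cb; Ca; Ca]; [:: Cc; Ca; Ca]; [:: Ca; Cb; Cc]].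
Definition forbidden_types : seq (seq col) :=
  [:: [:: Cb; Cb; Cb]; [:: Ca; Cc; Cc]; [:: Cb; Cc; Cc]; [:: Cc; Cb; Cb]].

Definition mandatory (h i j : col) : bool :=
  has (perm_eq [:: h; i; j]) mandatory_types.
Definition forbidden (h i j : col) : bool :=
  has (perm_eq [:: h; i; j]) forbidden_types.

(* A colouring of the 2-element subsets of X is given by a function on
   ordered pairs that is symmetric on distinct points (values on the
   diagonal are irrelevant). *)
Definition is_representation (X : finType) (f : X -> X -> col) : Prop :=
  (forall x y : X, x != y -> f x y = f y x) /\
  (forall c : col, exists x y : X, x != y /\ f x y = c) /\
  (forall (x y : X) (h i j : col), x != y -> mandatory h i j -> f x y = h ->
     exists z : X, [/\ z != x, z != y, f x z = i & f z y = j]) /\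
  (forall x y z : X, x != y -> y != z -> x != z ->
     ~~ forbidden (f x y) (f y z) (f x z)).

(* Main.v *)
Require Import Defs.
From mathcomp Require Import all_boot.

Definition ceq (x y : col) : bool :=
  match x, y with Ca, Ca | Cb, Cb | Cc, Cc => true | _, _ => false end.
Lemma colE (x y : col) : (x == y) = ceq x y.
Proof. by case: x; case: y => //=; apply/eqP. Qed.
Definition cnt (c : col) (s : seq col) := count (ceq c) s.
Definition cv h i j := let s := [:: h; i; j] in (cnt Ca s, cnt Cb s, cnt Cc s).
Definition mand_c h i j : bool :=
  cv h i j \in [:: (3,0,0); (0,0,3); (1,2,0); (2,1,0); (2,0,1); (1,1,1)].
Definition forb_c h i j : bool :=
  cv h i j \in [:: (0,3,0); (1,0,2); (0,1,2); (0,2,1)].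
Lemma mandE h i j : mandatory h i j = mand_c h i j.
Proof. by case: h; case: i; case: j; rewrite /mandatory /= /perm_eq /= !colE. Qed.
Lemma forbE h i j : forbidden h i j = forb_c h i j.
Proof. by case: h; case: i; case: j; rewrite /forbidden /= /perm_eq /= !colE. Qed.
Definition cols := [:: Ca; Cb; Cc].
Lemma mem_cols c : c \in cols. Proof. by case: c; rewrite /cols !inE !colE. Qed.
Definition sv : seq nat := [:: 0; 1; 3; 1; 4; 3; 3; 2; 2; 1; 4; 2; 4].
Definition col_of (d : nat) : col :=
  if d %% 13 == 0 then Cc else if d %% 5 == nth 0 sv (d %% 13) then Cb else Ca.
Definition g (x y : nat) : col := col_of (y + 65 - x).
Definition fr (x y : 'I_65) : col := g x y.
Definition I := iota 0 65.

Definition chk_sym := all (fun x => all (fun y => (x != y) ==> ceq (g x y) (g y x)) I) I.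
Definition chk_col := all (fun c => has (fun x => has (fun y => (x != y) && ceq (g x y) c) I) I) cols.
Definition chk_mand := all (fun x => all (fun y => all (fun i => all (fun j =>
  ((x != y) && mand_c (g x y) i j) ==>
  has (fun z => [&& z != x, z != y, ceq (g x z) i & ceq (g z y) j]) I) cols) cols) I) I.
Definition chk_forb := all (fun x => all (fun y => all (fun z =>
  [&& x != y, y != z & x != z] ==> ~~ forb_c (g x y) (g y z) (g x z)) I) I) I.

Lemma chk_sym_ok : chk_sym. Proof. vm_compute. reflexivity. Qed.
Lemma chk_col_ok : chk_col. Proof. vm_compute. reflexivity. Qed.
Lemma chk_mand_ok : chk_mand. Proof. vm_compute. reflexivity. Qed.
Lemma chk_forb_ok : chk_forb. Proof. vm_compute. reflexivity. Qed.

Lemma inI (x : 'I_65) : val x \in I.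
Proof. by rewrite mem_iota ltn_ord. Qed.
Lemma ceqP x y : ceq x y -> x = y.
Proof. by rewrite -colE => /eqP. Qed.

Theorem mainTheorem7 :
  exists (n : nat) (f : 'I_n -> 'I_n -> col), is_representation f.
Proof.
exists 65, fr; split; [|split; [|split]].
- move=> x y xy; have /allP/(_ _ (inI x))/allP/(_ _ (inI y))/implyP := chk_sym_ok.
  by move=> /(_ xy)/ceqP.
- move=> c; have /allP/(_ c (mem_cols c))/hasP[x xI /hasP[y yI /andP[xy /ceqP e]]] := chk_col_ok.
  move: xI yI; rewrite !mem_iota /= => xl yl.
  by exists (Ordinal xl), (Ordinal yl); split.
- move=> x y h i j xy m e; subst h.
  have /allP/(_ _ (inI x))/allP/(_ _ (inI y))/allP/(_ i (mem_cols i))/allP/(_ j (mem_cols j))/implyP := chk_mand_ok.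
  rewrite -mandE xy m => /(_ isT)/hasP[z zI /and4P[zx zy /ceqP e1 /ceqP e2]].
  move: zI; rewrite mem_iota /= => zl.
  by exists (Ordinal zl); split.
- move=> x y z xy yz xz.
  have /allP/(_ _ (inI x))/allP/(_ _ (inI y))/allP/(_ _ (inI z))/implyP := chk_forb_ok.
  by rewrite forbE; apply; rewrite xy yz xz.
Qed.
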